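(* Let $A\bowtie^{\theta} I$ be an amalgamated Banach algebra as in the context, and assume $A\bowtie^{\theta} I$ is commutative. Then $A\bowtie^{\theta} I$ is weakly amenable if and only if both $A$ and $I$ are weakly amenable.
   Context: Let $A$ and $B$ be Banach algebras, $\theta:A\to B$ a continuous algebra homomorphism with $\|\theta\|\le 1$, and $I$ a closed two-sided ideal of $B$. The amalgamated Banach algebra $A\bowtie^{\theta} I$ is the Banach space $\{(a,i): a\in A,\ i\in I\}$ with norm $\|(a,i)\|=\|a\|+\|i\|$ and product $(a,i)\cdot(a',i')=(aa',\ \theta(a)i'+i\theta(a')+ii')$. A Banach algebra $C$ is weakly amenable if every bounded derivation $D:C\to C^*$ (i.e. bounded linear with $D(ab)=a\cdot D(b)+D(a)\cdot b$, where $\langle a\cdot f,b\rangle=f(ba)$, $\langle f\cdot a,b\rangle=f(ab)$) is inner, i.e. of the form $D(a)=a\cdot f-f\cdot a$ for some $f\in C^*$. *)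

(* Defs.v *)
From Stdlib Require Import Reals.
Open Scope R_scope.

Record Cx : Type := mkCx { Cre : R ; Cim : R }.
Definition C0 : Cx := mkCx 0 0.
Definition C1 : Cx := mkCx 1 0.
Definition Cadd (z w : Cx) : Cx := mkCx (Cre z + Cre w) (Cim z + Cim w).
Definition Copp (z : Cx) : Cx := mkCx (- Cre z) (- Cim z).
Definition Csub (z w : Cx) : Cx := Cadd z (Copp w).
Definition Cmul (z w : Cx) : Cx :=
  mkCx (Cre z * Cre w - Cim z * Cim w) (Cre z * Cim w + Cim z * Cre w).
Definition Cmod (z : Cx) : R := sqrt (Cre z * Cre z + Cim z * Cim z).

Record NAlg : Type := MkNAlg {
  carrier :> Type ;
  nadd  : carrier -> carrier -> carrier ;
  nzero : carrier ;
  nopp  : carrier -> carrier ;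
  nscal : Cx -> carrier -> carrier ;
  nmul  : carrier -> carrier -> carrier ;
  nnorm : carrier -> R
}.
Arguments nadd {n}. Arguments nzero {n}. Arguments nopp {n}.
Arguments nscal {n}. Arguments nmul {n}. Arguments nnorm {n}.

Definition nsub {X : NAlg} (x y : X) : X := nadd x (nopp y).

Definition cauchy {X : NAlg} (u : nat -> X) : Prop :=
  forall eps, 0 < eps -> exists N, forall m n, (N <= m)%nat -> (N <= n)%nat ->
    nnorm (nsub (u m) (u n)) < eps.
Definition converges {X : NAlg} (u : nat -> X) (l : X) : Prop :=
  forall eps, 0 < eps -> exists N, forall n, (N <= n)%nat ->
    nnorm (nsub (u n) l) < eps.

Record is_banach_algebra (X : NAlg) : Prop := {
  ba_add_assoc : forall x y z : X, nadd x (nadd y z) = nadd (nadd x y) z ;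
  ba_add_comm  : forall x y : X, nadd x y = nadd y x ;
  ba_add_0     : forall x : X, nadd nzero x = x ;
  ba_add_opp   : forall x : X, nadd (nopp x) x = nzero ;
  ba_scal_1    : forall x : X, nscal C1 x = x ;
  ba_scal_assoc : forall (l m : Cx) (x : X), nscal (Cmul l m) x = nscal l (nscal m x) ;
  ba_scal_addl : forall (l m : Cx) (x : X), nscal (Cadd l m) x = nadd (nscal l x) (nscal m x) ;
  ba_scal_addr : forall (l : Cx) (x y : X), nscal l (nadd x y) = nadd (nscal l x) (nscal l y) ;
  ba_mul_assoc : forall x y z : X, nmul x (nmul y z) = nmul (nmul x y) z ;
  ba_mul_addl  : forall x y z : X, nmul (nadd x y) z = nadd (nmul x z) (nmul y z) ;
  ba_mul_addr  : forall x y z : X, nmul x (nadd y z) = nadd (nmul x y) (nmul x z) ;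
  ba_mul_scall : forall (l : Cx) (x y : X), nmul (nscal l x) y = nscal l (nmul x y) ;
  ba_mul_scalr : forall (l : Cx) (x y : X), nmul x (nscal l y) = nscal l (nmul x y) ;
  ba_norm_eq0  : forall x : X, nnorm x = 0 -> x = nzero ;
  ba_norm_tri  : forall x y : X, nnorm (nadd x y) <= nnorm x + nnorm y ;
  ba_norm_scal : forall (l : Cx) (x : X), nnorm (nscal l x) = Cmod l * nnorm x ;
  ba_norm_mul  : forall x y : X, nnorm (nmul x y) <= nnorm x * nnorm y ;
  ba_complete  : forall u : nat -> X, cauchy u -> exists l, converges u l
}.

Definition commutative (X : NAlg) : Prop := forall x y : X, nmul x y = nmul y x.

Record contraction_hom (A B : NAlg) (theta : A -> B) : Prop := {
  th_add  : forall x y, theta (nadd x y) = nadd (theta x) (theta y) ;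
  th_scal : forall l x, theta (nscal l x) = nscal l (theta x) ;
  th_mul  : forall x y, theta (nmul x y) = nmul (theta x) (theta y) ;
  th_norm : forall x, nnorm (theta x) <= nnorm x
}.

Record closed_ideal (B : NAlg) (I : B -> Prop) : Prop := {
  ci_zero : I nzero ;
  ci_add  : forall x y, I x -> I y -> I (nadd x y) ;
  ci_opp  : forall x, I x -> I (nopp x) ;
  ci_scal : forall l x, I x -> I (nscal l x) ;
  ci_mull : forall b x, I x -> I (nmul b x) ;
  ci_mulr : forall b x, I x -> I (nmul x b) ;
  ci_closed : forall (u : nat -> B) l, (forall n, I (u n)) -> converges u l -> I l
}.

Section IdealAlg.
Variables (B : NAlg) (I : B -> Prop) (HI : closed_ideal B I).
Definition ICar := { x : B | I x }.
Definition Iadd (x y : ICar) : ICar :=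
  exist _ (nadd (proj1_sig x) (proj1_sig y)) (ci_add B I HI _ _ (proj2_sig x) (proj2_sig y)).
Definition Izero : ICar := exist _ nzero (ci_zero B I HI).
Definition Iopp (x : ICar) : ICar := exist _ (nopp (proj1_sig x)) (ci_opp B I HI _ (proj2_sig x)).
Definition Iscal (l : Cx) (x : ICar) : ICar :=
  exist _ (nscal l (proj1_sig x)) (ci_scal B I HI l _ (proj2_sig x)).
Definition Imul (x y : ICar) : ICar :=
  exist _ (nmul (proj1_sig x) (proj1_sig y)) (ci_mull B I HI (proj1_sig x) _ (proj2_sig y)).
Definition Inorm (x : ICar) : R := nnorm (proj1_sig x).
Definition ideal_alg : NAlg := MkNAlg ICar Iadd Izero Iopp Iscal Imul Inorm.
End IdealAlg.

Section Amalg.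
Variables (A B : NAlg) (theta : A -> B) (I : B -> Prop) (HI : closed_ideal B I).
Let J := ideal_alg B I HI.
Definition AICar := (A * J)%type.
Definition AIadd (x y : AICar) : AICar := (nadd (fst x) (fst y), nadd (snd x) (snd y)).
Definition AIzero : AICar := (nzero, nzero).
Definition AIopp (x : AICar) : AICar := (nopp (fst x), nopp (snd x)).
Definition AIscal (l : Cx) (x : AICar) : AICar := (nscal l (fst x), nscal l (snd x)).
Definition AImul_snd (x y : AICar) : J :=
  exist _ (nadd (nadd (nmul (theta (fst x)) (proj1_sig (snd y)))
                      (nmul (proj1_sig (snd x)) (theta (fst y))))
                (nmul (proj1_sig (snd x)) (proj1_sig (snd y))))
    (ci_add B I HI _ _
       (ci_add B I HI _ _ (ci_mull B I HI _ _ (proj2_sig (snd y)))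
                          (ci_mulr B I HI _ _ (proj2_sig (snd x))))
       (ci_mull B I HI _ _ (proj2_sig (snd y)))).
Definition AImul (x y : AICar) : AICar := (nmul (fst x) (fst y), AImul_snd x y).
Definition AInorm (x : AICar) : R := nnorm (fst x) + nnorm (snd x).
Definition amalg : NAlg := MkNAlg AICar AIadd AIzero AIopp AIscal AImul AInorm.
End Amalg.

Definition bounded_functional {X : NAlg} (f : X -> Cx) : Prop :=
  (forall x y, f (nadd x y) = Cadd (f x) (f y)) /\
  (forall l x, f (nscal l x) = Cmul l (f x)) /\
  (exists M, forall x, Cmod (f x) <= M * nnorm x).

(* D : X -> X^* bounded linear derivation, with
   <a.f, b> = f(ba), <f.a, b> = f(ab). *)
Definition bounded_derivation_to_dual {X : NAlg} (D : X -> X -> Cx) : Prop :=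
  (forall a, bounded_functional (D a)) /\
  (forall a b c, D (nadd a b) c = Cadd (D a c) (D b c)) /\
  (forall l a c, D (nscal l a) c = Cmul l (D a c)) /\
  (exists M, forall a c, Cmod (D a c) <= M * nnorm a * nnorm c) /\
  (forall a b c, D (nmul a b) c = Cadd (D b (nmul c a)) (D a (nmul b c))).

(* D is inner: D(a) = a.f - f.a for some f in X^* *)
Definition inner_derivation {X : NAlg} (D : X -> X -> Cx) : Prop :=
  exists f : X -> Cx, bounded_functional f /\
    forall a c, D a c = Csub (f (nmul c a)) (f (nmul a c)).

Definition weakly_amenable (X : NAlg) : Prop :=
  forall D : X -> X -> Cx, bounded_derivation_to_dual D -> inner_derivation D.

(* Main.v *)
Require Import Defs.
From Stdlib Require Import Reals Lra Psatz ProofIrrelevance.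
Open Scope R_scope.

Lemma Cx_ext (z w : Cx) : Cre z = Cre w -> Cim z = Cim w -> z = w.
Proof. destruct z, w; simpl; intros; subst; reflexivity. Qed.

Lemma Cmod_ge0 z : 0 <= Cmod z.
Proof. unfold Cmod; apply sqrt_pos. Qed.

Lemma Cmod_C0 : Cmod C0 = 0.
Proof. unfold Cmod, C0; simpl. replace (0*0+0*0) with 0 by ring. apply sqrt_0. Qed.

Lemma Cmod_mul z w : Cmod (Cmul z w) = Cmod z * Cmod w.
Proof.
  destruct z as [a b], w as [c d]; unfold Cmod, Cmul; simpl.
  rewrite <- sqrt_mult by nra. f_equal; ring.
Qed.

Lemma Cmod_opp z : Cmod (Copp z) = Cmod z.
Proof. destruct z as [a b]; unfold Cmod, Copp; simpl. f_equal; ring. Qed.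

Lemma Cmod_add z w : Cmod (Cadd z w) <= Cmod z + Cmod w.
Proof.
  destruct z as [a b], w as [c d]; unfold Cmod, Cadd; simpl.
  set (s1 := sqrt (a*a+b*b)). set (s2 := sqrt (c*c+d*d)).
  assert (h1 : 0 <= s1) by apply sqrt_pos. assert (h2 : 0 <= s2) by apply sqrt_pos.
  assert (e1 : s1 * s1 = a*a+b*b) by (apply sqrt_sqrt; nra).
  assert (e2 : s2 * s2 = c*c+d*d) by (apply sqrt_sqrt; nra).
  assert (cs : a*c+b*d <= s1*s2).
  { destruct (Rle_dec (a*c+b*d) 0). nra.
    apply Rsqr_incr_0_var. unfold Rsqr.
    replace (s1*s2*(s1*s2)) with ((s1*s1)*(s2*s2)) by ring. rewrite e1, e2. all: try nra. pose proof (Rle_0_sqr (a*d-b*c)); unfold Rsqr in *; nra. }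
  rewrite <- (sqrt_square (s1+s2)) by lra. apply sqrt_le_1_alt. nra.
Qed.

Lemma Cmod_sub z w : Cmod (Csub z w) <= Cmod z + Cmod w.
Proof. unfold Csub. rewrite <- (Cmod_opp w). apply Cmod_add. Qed.

Lemma Cmul_self_0 z : Cmul z z = C0 -> z = C0.
Proof.
  destruct z as [a b]; unfold Cmul, C0; intro H; injection H; intros H2 H1.
  assert (a*b = 0) by lra.
  assert (a = 0 /\ b = 0) as [-> ->].
  { destruct (Rmult_integral _ _ H0) as [-> | ->]; split; nra. }
  reflexivity.
Qed.
Section BA.
Variable Y : NAlg.
Hypothesis HY : is_banach_algebra Y.

Lemma addA_r (x y z : Y) : nadd (nadd x y) z = nadd x (nadd y z).
Proof. symmetry; apply (ba_add_assoc _ HY). Qed.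
Lemma addC (x y : Y) : nadd x y = nadd y x.
Proof. apply (ba_add_comm _ HY). Qed.
Lemma addLC (x y z : Y) : nadd x (nadd y z) = nadd y (nadd x z).
Proof. rewrite (ba_add_assoc _ HY), (addC x y), <- (ba_add_assoc _ HY); reflexivity. Qed.
Lemma add0l (x : Y) : nadd nzero x = x.
Proof. apply (ba_add_0 _ HY). Qed.
Lemma add0r (x : Y) : nadd x nzero = x.
Proof. rewrite addC; apply add0l. Qed.
Lemma add_cancel (x y : Y) : nadd x y = y -> x = nzero.
Proof.
  intro H. assert (E : nadd y (nopp y) = nzero) by (rewrite addC; apply (ba_add_opp _ HY)).
  rewrite <- E. rewrite <- (add0r x) at 1. rewrite <- E, (ba_add_assoc _ HY), H. reflexivity.
Qed.
Lemma mul0l (x : Y) : nmul nzero x = nzero.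
Proof. apply (add_cancel _ (nmul nzero x)). rewrite <- (ba_mul_addl _ HY), add0l; reflexivity. Qed.
Lemma mul0r (x : Y) : nmul x nzero = nzero.
Proof. apply (add_cancel _ (nmul x nzero)). rewrite <- (ba_mul_addr _ HY), add0l; reflexivity. Qed.
Lemma scal0l (x : Y) : nscal C0 x = nzero.
Proof.
  apply (add_cancel _ (nscal C0 x)). rewrite <- (ba_scal_addl _ HY).
  f_equal. apply Cx_ext; simpl; ring.
Qed.
Lemma scal0r (l : Cx) : nscal l (@nzero Y) = nzero.
Proof. apply (add_cancel _ (nscal l nzero)). rewrite <- (ba_scal_addr _ HY), add0l; reflexivity. Qed.
Lemma norm0 : nnorm (@nzero Y) = 0.
Proof. rewrite <- (scal0l nzero), (ba_norm_scal _ HY), Cmod_C0; ring. Qed.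
Lemma norm_ge0 (x : Y) : 0 <= nnorm x.
Proof.
  assert (H : nadd x (nscal (mkCx (-1) 0) x) = nzero).
  { rewrite <- (ba_scal_1 _ HY x) at 1. rewrite <- (ba_scal_addl _ HY).
    rewrite <- (scal0l x). f_equal. apply Cx_ext; unfold C1, C0; simpl; ring. }
  assert (Hm : Cmod (mkCx (-1) 0) = 1).
  { unfold Cmod; simpl. replace (-1 * -1 + 0 * 0) with 1 by ring. apply sqrt_1. }
  pose proof (ba_norm_tri _ HY x (nscal (mkCx (-1) 0) x)) as T.
  rewrite H, norm0, (ba_norm_scal _ HY), Hm in T. lra.
Qed.
Lemma mulA_r (x y z : Y) : nmul (nmul x y) z = nmul x (nmul y z).
Proof. symmetry; apply (ba_mul_assoc _ HY). Qed.
End BA.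

Ltac bring H a :=
  lazymatch goal with
  | |- _ = nadd a _ => idtac
  | |- _ = a => idtac
  | |- _ = ?t =>
    lazymatch t with
    | context [nadd ?b (nadd a ?r)] => rewrite (addLC _ H b a r); bring H a
    | context [nadd ?b a] => rewrite (addC _ H b a); bring H a
    end
  end.
Ltac ac_loop H :=
  first [ reflexivity
        | lazymatch goal with
          | |- nadd ?a ?s = _ => bring H a; apply (f_equal (nadd a)); ac_loop H
          end ].
Ltac ac H := repeat rewrite (addA_r _ H); ac_loop H.

Lemma zero_inner (X : NAlg) (D : X -> X -> Cx) :
  (forall a c, D a c = C0) -> @inner_derivation X D.
Proof.
  intro H. exists (fun _ => C0). split.
  - split; [|split].
    + intros; apply Cx_ext; simpl; ring.
    + intros; apply Cx_ext; simpl; ring.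
    + exists 0; intros. rewrite Cmod_C0; lra.
  - intros; rewrite H; apply Cx_ext; simpl; ring.
Qed.

Lemma wa_zero (X : NAlg) : commutative X -> weakly_amenable X ->
  forall D, @bounded_derivation_to_dual X D -> forall a c, D a c = C0.
Proof.
  intros Hc Hw D HD a c. destruct (Hw D HD) as [f [_ Hf]].
  rewrite Hf, (Hc c a). apply Cx_ext; simpl; ring.
Qed.

Lemma deriv_intro (X : NAlg) (D : X -> X -> Cx) :
  (forall a x y, D a (nadd x y) = Cadd (D a x) (D a y)) ->
  (forall a l x, D a (nscal l x) = Cmul l (D a x)) ->
  (forall a b c, D (nadd a b) c = Cadd (D a c) (D b c)) ->
  (forall l a c, D (nscal l a) c = Cmul l (D a c)) ->
  (exists M, forall a c, Cmod (D a c) <= M * nnorm a * nnorm c) ->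
  (forall a b c, D (nmul a b) c = Cadd (D b (nmul c a)) (D a (nmul b c))) ->
  @bounded_derivation_to_dual X D.
Proof.
  intros H1 H2 H3 H4 [M HM] H6. split; [|split;[|split;[|split]]]; auto.
  - intro a. split; [|split]; auto. exists (M * nnorm a); auto.
  - exists M; auto.
Qed.

Lemma bf_bound (X : NAlg) (f : X -> Cx) : (forall x : X, 0 <= nnorm x) ->
  @bounded_functional X f -> exists M, 0 <= M /\ forall x, Cmod (f x) <= M * nnorm x.
Proof.
  intros Hn [_ [_ [M HM]]]. exists (Rabs M). split. apply Rabs_pos.
  intro x. specialize (HM x). pose proof (Hn x). pose proof (Rle_abs M). nra.
Qed.

Lemma sq_zero (X : NAlg) : (forall x : X, 0 <= nnorm x) -> commutative X -> weakly_amenable X ->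
  forall f : X -> Cx, @bounded_functional X f -> (forall j k, f (nmul j k) = C0) ->
  forall k, f k = C0.
Proof.
  intros Hn Hc Hw f Hf H0 k.
  pose proof (bf_bound X f Hn Hf) as [M [HM0 HM]].
  destruct Hf as [Fa [Fs _]].
  set (S := fun x z : X => Cmul (f x) (f z)).
  assert (HS : @bounded_derivation_to_dual X S).
  { apply deriv_intro; unfold S.
    - intros; rewrite Fa; apply Cx_ext; simpl; ring.
    - intros; rewrite Fs; apply Cx_ext; simpl; ring.
    - intros; rewrite Fa; apply Cx_ext; simpl; ring.
    - intros; rewrite Fs; apply Cx_ext; simpl; ring.
    - exists (M*M); intros a c. rewrite Cmod_mul.
      pose proof (HM a); pose proof (HM c); pose proof (Cmod_ge0 (f a)); pose proof (Cmod_ge0 (f c)).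
      pose proof (Hn a); pose proof (Hn c).
      replace (M*M*nnorm a*nnorm c) with ((M*nnorm a)*(M*nnorm c)) by ring.
      apply Rmult_le_compat; auto.
    - intros; rewrite !H0. apply Cx_ext; simpl; ring. }
  apply Cmul_self_0. exact (wa_zero X Hc Hw S HS k k).
Qed.
Section Main.
Variables (A B : NAlg) (theta : A -> B) (I : B -> Prop).
Hypotheses (HA : is_banach_algebra A) (HB : is_banach_algebra B)
  (Ht : contraction_hom A B theta) (HI : closed_ideal B I).
Local Notation X := (amalg A B theta I HI).
Local Notation J := (ideal_alg B I HI).

Lemma Jeq (u v : J) : proj1_sig u = proj1_sig v -> u = v.
Proof. destruct u as [u pu], v as [v pv]; simpl; intro; subst. f_equal; apply proof_irrelevance. Qed.

Lemma th0 : theta nzero = nzero.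
Proof. apply (add_cancel _ HB _ (theta nzero)). rewrite <- (th_add _ _ _ Ht), add0l; auto. Qed.

Lemma thM a b : theta (nmul a b) = nmul (theta a) (theta b).
Proof. apply (th_mul _ _ _ Ht). Qed.

Ltac bsimp := repeat (rewrite ?(ba_mul_addl _ HB), ?(ba_mul_addr _ HB), ?thM, ?th0,
   ?(mul0l _ HB), ?(mul0r _ HB), ?(add0l _ HB), ?(add0r _ HB), ?(mulA_r _ HB)).

Lemma XmulA (x y z : X) : nmul x (nmul y z) = nmul (nmul x y) z.
Proof.
  destruct x as [a i], y as [b j], z as [c k]; simpl. unfold AImul; simpl. f_equal.
  - apply (ba_mul_assoc _ HA).
  - apply Jeq; simpl. bsimp. ac HB.
Qed.

Lemma XmulDl (x y z : X) : nmul (nadd x y) z = nadd (nmul x z) (nmul y z).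
Proof.
  destruct x as [a i], y as [b j], z as [c k]; simpl. unfold AImul, AIadd; simpl. f_equal.
  - apply (ba_mul_addl _ HA).
  - apply Jeq; simpl. rewrite (th_add _ _ _ Ht). bsimp. ac HB.
Qed.
Lemma XmulDr (x y z : X) : nmul x (nadd y z) = nadd (nmul x y) (nmul x z).
Proof.
  destruct x as [a i], y as [b j], z as [c k]; simpl. unfold AImul, AIadd; simpl. f_equal.
  - apply (ba_mul_addr _ HA).
  - apply Jeq; simpl. rewrite (th_add _ _ _ Ht). bsimp. ac HB.
Qed.
Lemma Xmul_scall l (x y : X) : nmul (nscal l x) y = nscal l (nmul x y).
Proof.
  destruct x as [a i], y as [b j]; simpl. unfold AImul, AIscal; simpl. f_equal.
  - apply (ba_mul_scall _ HA).
  - apply Jeq; simpl. rewrite (th_scal _ _ _ Ht), ?(ba_mul_scall _ HB), ?(ba_mul_scalr _ HB), ?(ba_scal_addr _ HB). reflexivity.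
Qed.
Lemma Xmul_scalr l (x y : X) : nmul x (nscal l y) = nscal l (nmul x y).
Proof.
  destruct x as [a i], y as [b j]; simpl. unfold AImul, AIscal; simpl. f_equal.
  - apply (ba_mul_scalr _ HA).
  - apply Jeq; simpl. rewrite (th_scal _ _ _ Ht), ?(ba_mul_scall _ HB), ?(ba_mul_scalr _ HB), ?(ba_scal_addr _ HB). reflexivity.
Qed.

Definition jm (k : J) : X := (nzero, k).
Definition am (a : A) : X := (a, Izero B I HI).
Definition PA (x : X) : X := am (fst x).
Definition PJ (x : X) : X := jm (snd x).

Lemma Xdecomp (x : X) : x = nadd (PA x) (PJ x).
Proof.
  destruct x as [a i]; unfold PA, PJ, am, jm; simpl; unfold AIadd; simpl. f_equal.
  - rewrite (add0r _ HA); auto.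
  - apply Jeq; simpl. rewrite (add0l _ HB); auto.
Qed.
Lemma Xam_mul a b : nmul (am a) (am b) = am (nmul a b).
Proof. unfold am; simpl; unfold AImul; simpl. f_equal. apply Jeq; simpl. bsimp. reflexivity. Qed.
Lemma Xjm_mul (i k : J) : nmul (jm i) (jm k) = jm (nmul i k).
Proof. unfold jm; simpl; unfold AImul; simpl. f_equal. apply (mul0l _ HA). apply Jeq; simpl. bsimp. reflexivity. Qed.
Lemma XfstJr (x y : X) : fst y = nzero -> fst (nmul x y) = nzero.
Proof. destruct x, y; simpl; intros ->. apply (mul0r _ HA). Qed.
Lemma XfstJl (x y : X) : fst x = nzero -> fst (nmul x y) = nzero.
Proof. destruct x, y; simpl; intros ->. apply (mul0l _ HA). Qed.
Lemma XsndJ (x y : X) : fst x = nzero -> fst y = nzero -> snd (nmul x y) = Imul B I HI (snd x) (snd y).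
Proof. destruct x, y; simpl; intros -> ->. apply Jeq; simpl. bsimp. reflexivity. Qed.
Lemma XPAmul (x y : X) : PA (nmul x y) = nmul (PA x) (PA y).
Proof. unfold PA. rewrite Xam_mul. reflexivity. Qed.
Lemma XPJmul (x y : X) : PJ (nmul x y) =
  nadd (nadd (nmul (PA x) (PJ y)) (nmul (PJ x) (PA y))) (nmul (PJ x) (PJ y)).
Proof.
  destruct x as [a i], y as [b j]; unfold PA, PJ, am, jm; simpl; unfold AImul, AIadd; simpl. f_equal.
  - rewrite (mul0r _ HA), (mul0l _ HA), (mul0l _ HA), !(add0l _ HA). reflexivity.
  - apply Jeq; simpl. bsimp. reflexivity.
Qed.
Lemma XPAadd (x y : X) : PA (nadd x y) = nadd (PA x) (PA y).
Proof. destruct x, y; unfold PA, am; simpl; unfold AIadd; simpl. f_equal. apply Jeq; simpl. rewrite (add0l _ HB); auto. Qed.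
Lemma XPJadd (x y : X) : PJ (nadd x y) = nadd (PJ x) (PJ y).
Proof. destruct x, y; unfold PJ, jm; simpl; unfold AIadd; simpl. f_equal. rewrite (add0l _ HA); auto. Qed.
Lemma XPAscal l (x : X) : PA (nscal l x) = nscal l (PA x).
Proof. destruct x; unfold PA, am; simpl; unfold AIscal; simpl. f_equal. apply Jeq; simpl. rewrite (scal0r _ HB); auto. Qed.
Lemma XPJscal l (x : X) : PJ (nscal l x) = nscal l (PJ x).
Proof. destruct x; unfold PJ, jm; simpl; unfold AIscal; simpl. f_equal. rewrite (scal0r _ HA); auto. Qed.
Lemma Xjm_add (i k : J) : jm (nadd i k) = nadd (jm i) (jm k).
Proof. unfold jm; simpl; unfold AIadd; simpl. f_equal. rewrite (add0l _ HA); auto. Qed.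
Lemma Xjm_scal l (i : J) : jm (nscal l i) = nscal l (jm i).
Proof. unfold jm; simpl; unfold AIscal; simpl. f_equal. rewrite (scal0r _ HA); auto. Qed.
Lemma Xam_add a b : am (nadd a b) = nadd (am a) (am b).
Proof. unfold am; simpl; unfold AIadd; simpl. f_equal. apply Jeq; simpl. rewrite (add0l _ HB); auto. Qed.
Lemma Xam_scal l a : am (nscal l a) = nscal l (am a).
Proof. unfold am; simpl; unfold AIscal; simpl. f_equal. apply Jeq; simpl. rewrite (scal0r _ HB); auto. Qed.

Lemma Inorm_ge0 (k : J) : 0 <= nnorm k.
Proof. apply (norm_ge0 _ HB). Qed.
Lemma Xnorm_ge0 (x : X) : 0 <= nnorm x.
Proof. destruct x as [a i]; simpl; unfold AInorm; simpl. pose proof (norm_ge0 _ HA a); pose proof (norm_ge0 _ HB (proj1_sig i)); unfold Inorm; lra. Qed.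
Lemma Xnorm_snd (x : X) : nnorm (snd x) <= nnorm x.
Proof. destruct x as [a i]; simpl; unfold AInorm; simpl. pose proof (norm_ge0 _ HA a); lra. Qed.
Lemma Xnorm_fst (x : X) : nnorm (fst x) <= nnorm x.
Proof. destruct x as [a i]; simpl; unfold AInorm; simpl. pose proof (norm_ge0 _ HB (proj1_sig i)); unfold Inorm; lra. Qed.
Lemma Xnorm_jm k : nnorm (jm k) = nnorm k.
Proof. unfold jm; simpl; unfold AInorm; simpl. rewrite (norm0 _ HA); ring. Qed.
Lemma Xnorm_am a : nnorm (am a) = nnorm a.
Proof. unfold am; simpl; unfold AInorm; simpl; unfold Inorm; simpl. rewrite (norm0 _ HB); ring. Qed.
Lemma Xnorm_PA x : nnorm (PA x) <= nnorm x.
Proof. unfold PA; rewrite Xnorm_am; apply Xnorm_fst. Qed.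
Lemma Xnorm_PJ x : nnorm (PJ x) <= nnorm x.
Proof. unfold PJ; rewrite Xnorm_jm; apply Xnorm_snd. Qed.
Lemma Jnorm_mul (i k : J) : nnorm (nmul i k) <= nnorm i * nnorm k.
Proof. apply (ba_norm_mul _ HB). Qed.
Lemma Xnorm_mul (x y : X) : nnorm (nmul x y) <= nnorm x * nnorm y.
Proof.
  destruct x as [a i], y as [b j]; simpl; unfold AInorm, AImul, Inorm; simpl.
  destruct i as [i pi], j as [j pj]; unfold Inorm, AImul_snd; simpl.
  pose proof (ba_norm_mul _ HA a b).
  pose proof (ba_norm_tri _ HB (nadd (nmul (theta a) j) (nmul i (theta b))) (nmul i j)).
  pose proof (ba_norm_tri _ HB (nmul (theta a) j) (nmul i (theta b))).
  pose proof (ba_norm_mul _ HB (theta a) j). pose proof (ba_norm_mul _ HB i (theta b)).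
  pose proof (ba_norm_mul _ HB i j).
  pose proof (th_norm _ _ _ Ht a). pose proof (th_norm _ _ _ Ht b).
  pose proof (norm_ge0 _ HA a). pose proof (norm_ge0 _ HA b).
  pose proof (norm_ge0 _ HB i). pose proof (norm_ge0 _ HB j).
  pose proof (norm_ge0 _ HB (theta a)). pose proof (norm_ge0 _ HB (theta b)).
  pose proof (Rmult_le_compat_r _ _ _ H10 H5). pose proof (Rmult_le_compat_l _ _ _ H9 H6).
  nra.
Qed.

Lemma JmulA (i j k : J) : nmul i (nmul j k) = nmul (nmul i j) k.
Proof. apply Jeq; simpl. apply (ba_mul_assoc _ HB). Qed.
Lemma JmulDr (i j k : J) : nmul i (nadd j k) = nadd (nmul i j) (nmul i k).
Proof. apply Jeq; simpl. apply (ba_mul_addr _ HB). Qed.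
Lemma Jmul_scalr l (i j : J) : nmul i (nscal l j) = nscal l (nmul i j).
Proof. apply Jeq; simpl. apply (ba_mul_scalr _ HB). Qed.

Lemma JimgE (u : X) : fst u = nzero -> u = jm (snd u).
Proof. destruct u; simpl; intros ->; reflexivity. Qed.

Lemma Cadd0_inv z w : Cadd z w = C0 -> z = C0 -> w = C0.
Proof. intros H ->. destruct w; unfold Cadd, C0 in *; simpl in *. injection H; intros. apply Cx_ext; simpl; lra. Qed.

Hypothesis Hc : commutative X.

Lemma Acomm : commutative A.
Proof. intros a b. pose proof (f_equal fst (Hc (am a) (am b))). rewrite !Xam_mul in H. exact H. Qed.
Lemma Jcomm : commutative J.
Proof. intros i k. pose proof (f_equal snd (Hc (jm i) (jm k))). rewrite !Xjm_mul in H. exact H. Qed.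

Lemma back : weakly_amenable A -> weakly_amenable J -> weakly_amenable X.
Proof.
  intros WAA WAJ D HD. apply zero_inner.
  pose proof HD as [Hf [Ha [Hs [[M HM] Hd]]]].
  assert (ZA : forall a c, D (am a) (am c) = C0).
  { apply (wa_zero A Acomm WAA (fun a c => D (am a) (am c))). apply deriv_intro.
    - intros. rewrite Xam_add. apply (Hf _).
    - intros. rewrite Xam_scal. apply (Hf _).
    - intros. rewrite Xam_add. apply Ha.
    - intros. rewrite Xam_scal. apply Hs.
    - exists M. intros. rewrite <- !Xnorm_am. apply HM.
    - intros. rewrite <- !Xam_mul. apply Hd. }
  assert (ZJ0 : forall i k, D (jm i) (jm k) = C0).
  { apply (wa_zero J Jcomm WAJ (fun a c => D (jm a) (jm c))). apply deriv_intro.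
    - intros. rewrite Xjm_add. apply (Hf _).
    - intros. rewrite Xjm_scal. apply (Hf _).
    - intros. rewrite Xjm_add. apply Ha.
    - intros. rewrite Xjm_scal. apply Hs.
    - exists M. intros. rewrite <- !Xnorm_jm. apply HM.
    - intros. rewrite <- !Xjm_mul. apply Hd. }
  assert (ZJ : forall u v : X, fst u = nzero -> fst v = nzero -> D u v = C0).
  { intros u v Hu Hv. rewrite (JimgE u Hu), (JimgE v Hv). apply ZJ0. }
  assert (ZAJ : forall a k, D (am a) (jm k) = C0).
  { intro a. apply (sq_zero J Inorm_ge0 Jcomm WAJ (fun k => D (am a) (jm k))).
    - destruct (Hf (am a)) as [fa [fs [Ma HMa]]]. split; [|split].
      + intros. rewrite Xjm_add. apply fa.
      + intros. rewrite Xjm_scal. apply fs.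
      + exists Ma. intros. rewrite <- Xnorm_jm. apply HMa.
    - intros j k. rewrite <- Xjm_mul.
      pose proof (Hd (am a) (jm j) (jm k)) as E.
      rewrite (ZJ (nmul (am a) (jm j))) in E by (first [reflexivity | apply XfstJr; reflexivity | apply XfstJl; reflexivity]).
      rewrite (ZJ (jm j)) in E by (first [reflexivity | apply XfstJr; reflexivity | apply XfstJl; reflexivity]).
      apply (Cadd0_inv C0); auto. }
  assert (ZJA : forall c i, D (jm i) (am c) = C0).
  { intro c. apply (sq_zero J Inorm_ge0 Jcomm WAJ (fun i => D (jm i) (am c))).
    - split; [|split].
      + intros. rewrite Xjm_add. apply Ha.
      + intros. rewrite Xjm_scal. apply Hs.
      + exists (M * nnorm (am c)). intros. rewrite <- Xnorm_jm.
        replace (M * nnorm (am c) * nnorm (jm x)) with (M * nnorm (jm x) * nnorm (am c)) by ring.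
        apply HM.
    - intros j k. rewrite <- Xjm_mul.
      rewrite Hd. rewrite (ZJ (jm k)), (ZJ (jm j)); try reflexivity.
      + apply Cx_ext; simpl; ring.
      + apply XfstJl; reflexivity.
      + apply XfstJr; reflexivity. }
  intros x z. rewrite (Xdecomp x). rewrite (Xdecomp z). rewrite Ha.
  destruct (Hf (PA x)) as [fa1 _]. destruct (Hf (PJ x)) as [fa2 _].
  rewrite fa1, fa2. unfold PA, PJ. rewrite ZA, ZAJ, ZJA, ZJ0.
  apply Cx_ext; simpl; ring.
Qed.

Lemma Rbound3 (v M p p' q q' : R) : v <= M * p * q -> 0 <= p -> p <= p' -> 0 <= q -> q <= q' ->
  v <= Rabs M * p' * q'.
Proof.
  intros H1 H2 H3 H4 H5. pose proof (Rle_abs M). pose proof (Rabs_pos M).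
  assert (M * p * q <= Rabs M * p * q).
  { apply Rmult_le_compat_r; auto. apply Rmult_le_compat_r; auto. }
  assert (Rabs M * p * q <= Rabs M * p' * q').
  { apply Rmult_le_compat; nra. }
  lra.
Qed.

Lemma forwardA : weakly_amenable X -> weakly_amenable A.
Proof.
  intros WX D HD. apply zero_inner. pose proof HD as [Hf [Ha [Hs [[M HM] Hd]]]].
  assert (Z : forall x z : X, D (fst x) (fst z) = C0).
  { apply (wa_zero X Hc WX (fun x z => D (fst x) (fst z))). apply deriv_intro.
    - intros a x y; destruct x, y; simpl; apply (Hf _).
    - intros a l x; destruct x; simpl; apply (Hf _).
    - intros a b c; destruct a, b; simpl; apply Ha.
    - intros l a c; destruct a; simpl; apply Hs.
    - exists (Rabs M). intros a c. apply (Rbound3 _ M (nnorm (fst a)) _ (nnorm (fst c)));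
      [apply HM | apply (norm_ge0 _ HA) | apply Xnorm_fst | apply (norm_ge0 _ HA) | apply Xnorm_fst].
    - intros a b c; destruct a, b, c; simpl; apply Hd. }
  intros a c. exact (Z (am a) (am c)).
Qed.

Lemma sndX_add (x y : X) : snd (nadd x y) = nadd (snd x) (snd y).
Proof. destruct x, y; reflexivity. Qed.
Lemma sndX_scal l (x : X) : snd (nscal l x) = nscal l (snd x).
Proof. destruct x; reflexivity. Qed.

Lemma Lkill : weakly_amenable X -> forall f : J -> Cx, @bounded_functional J f ->
  (forall j k, f (nmul j k) = C0) -> forall k, f k = C0.
Proof.
  intros WX f Hf H0.
  destruct (bf_bound J f Inorm_ge0 Hf) as [M [HM0 HM]].
  destruct Hf as [Fa [Fs _]].
  set (l := fun x : X => f (snd x)).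
  assert (la : forall x y, l (nadd x y) = Cadd (l x) (l y)).
  { intros; unfold l; rewrite sndX_add; apply Fa. }
  assert (ls : forall c x, l (nscal c x) = Cmul c (l x)).
  { intros; unfold l; rewrite sndX_scal; apply Fs. }
  assert (lb : forall x, Cmod (l x) <= M * nnorm x).
  { intros; unfold l. eapply Rle_trans. apply HM. apply Rmult_le_compat_l; auto. apply Xnorm_snd. }
  assert (lJ : forall u v : X, fst u = nzero -> fst v = nzero -> l (nmul u v) = C0).
  { intros u v Hu Hv. unfold l. rewrite XsndJ by auto. apply H0. }
  assert (T0 : forall x z, l (nmul (PA z) (PJ x)) = C0).
  { apply (wa_zero X Hc WX (fun x z => l (nmul (PA z) (PJ x)))). apply deriv_intro.
    - intros; rewrite XPAadd, XmulDl; apply la.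
    - intros; rewrite XPAscal, Xmul_scall; apply ls.
    - intros; rewrite XPJadd, XmulDr; apply la.
    - intros; rewrite XPJscal, Xmul_scalr; apply ls.
    - exists M. intros a c. eapply Rle_trans. apply lb.
      pose proof (Xnorm_mul (PA c) (PJ a)). pose proof (Xnorm_PA c). pose proof (Xnorm_PJ a).
      pose proof (Xnorm_ge0 (PA c)). pose proof (Xnorm_ge0 (PJ a)). pose proof (Xnorm_ge0 a).
      pose proof (Xnorm_ge0 c).
      replace (M * nnorm a * nnorm c) with (M * (nnorm c * nnorm a)) by ring.
      apply Rmult_le_compat_l; auto. eapply Rle_trans. apply H.
      apply Rmult_le_compat; auto.
    - intros a b c. rewrite XPJmul, !XmulDr, !la, !XPAmul.
      rewrite (XmulA (PA c) (PJ a) (PJ b)), (lJ (nmul (PA c) (PJ a)) (PJ b)) by (first [reflexivity | apply XfstJr; reflexivity]).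
      rewrite (XmulA (PA c) (PA a) (PJ b)), (Hc (PJ a) (PA b)), (XmulA (PA c) (PA b) (PJ a)),
        (Hc (PA c) (PA b)).
      apply Cx_ext; simpl; ring. }
  assert (lall : forall x y, l (nmul x y) = C0).
  { intros x y. transitivity (l (PJ (nmul x y))). reflexivity.
    rewrite XPJmul, !la, T0, (Hc (PJ x) (PA y)), T0, lJ by reflexivity.
    apply Cx_ext; simpl; ring. }
  intro k. change (f k) with (l (jm k)).
  apply (sq_zero X Xnorm_ge0 Hc WX l); auto.
  split; [|split]; auto. exists M; auto.
Qed.

Lemma XmulA_r (x y z : X) : nmul (nmul x y) z = nmul x (nmul y z).
Proof. symmetry; apply XmulA. Qed.
Lemma XmulLC (x y z : X) : nmul x (nmul y z) = nmul y (nmul x z).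
Proof. rewrite XmulA, (Hc x y), <- XmulA; reflexivity. Qed.

Ltac mbring a :=
  lazymatch goal with
  | |- _ = nmul a _ => idtac
  | |- _ = a => idtac
  | |- _ = ?t =>
    lazymatch t with
    | context [nmul ?b (nmul a ?r)] => rewrite (XmulLC b a r); mbring a
    | context [nmul ?b a] => rewrite (Hc b a); mbring a
    end
  end.
Ltac mloop :=
  first [ reflexivity
        | lazymatch goal with
          | |- nmul ?a ?s = _ => mbring a; apply (f_equal (nmul a)); mloop
          end ].
Ltac mac := repeat rewrite XmulA_r; mloop.
Ltac jimg := first [reflexivity | apply XfstJr; jimg | apply XfstJl; jimg].

Lemma forwardJ : weakly_amenable X -> weakly_amenable J.
Proof.
  intros WX D HD. apply zero_inner. pose proof HD as [Hf [Ha [Hs [[M HM] Hd]]]].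
  set (M0 := Rabs M).
  assert (HM0 : 0 <= M0) by apply Rabs_pos.
  assert (HMb : forall a c, Cmod (D a c) <= M0 * nnorm a * nnorm c).
  { intros a c. apply (Rbound3 _ M (nnorm a) _ (nnorm c)); auto; try apply Inorm_ge0; lra. }
  set (DX := fun u v : X => D (snd u) (snd v)).
  assert (DXder : forall u v t : X, fst u = nzero -> fst v = nzero -> fst t = nzero ->
     DX (nmul u v) t = Cadd (DX v (nmul t u)) (DX u (nmul v t))).
  { intros u v t Hu Hv Ht'. unfold DX. rewrite !XsndJ by auto. apply Hd. }
  assert (P4 : forall i k p q m : J, D i (nmul (nmul (nmul k p) q) m) = C0).
  { intros i0 k0 p q m.
    set (w := fun z : X => nmul (nmul z (jm p)) (jm q)).
    set (G := fun x z : X => Csub (DX (nmul x (w z)) (jm m)) (DX (w z) (nmul x (jm m)))).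
    assert (Gd : @bounded_derivation_to_dual X G).
    { apply deriv_intro.
      - intros a x y. unfold G, w, DX. rewrite !XmulDl, !XmulDr, !sndX_add, !Ha.
        apply Cx_ext; simpl; ring.
      - intros a l x. unfold G, w, DX. rewrite !Xmul_scall, !Xmul_scalr, !sndX_scal, !Hs.
        apply Cx_ext; simpl; ring.
      - intros a b c. unfold G, w, DX. rewrite !XmulDl, !sndX_add, Ha.
        destruct (Hf (snd (nmul (nmul c (jm p)) (jm q)))) as [fa _]. rewrite fa.
        apply Cx_ext; simpl; ring.
      - intros l a c. unfold G, w, DX. rewrite !Xmul_scall, !sndX_scal, Hs.
        destruct (Hf (snd (nmul (nmul c (jm p)) (jm q)))) as [_ [fs _]]. rewrite fs.
        apply Cx_ext; simpl; ring.
      - exists (M0 * (nnorm p * nnorm q * nnorm m) * 2). intros a c. unfold G, DX.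
        assert (Hw : nnorm (w c) <= nnorm c * nnorm p * nnorm q).
        { unfold w. eapply Rle_trans. apply Xnorm_mul. rewrite Xnorm_jm.
          apply Rmult_le_compat_r. apply Inorm_ge0. eapply Rle_trans. apply Xnorm_mul.
          rewrite Xnorm_jm. apply Rle_refl. }
        pose proof (Xnorm_ge0 a). pose proof (Xnorm_ge0 c). pose proof (Xnorm_ge0 (w c)).
        pose proof (Inorm_ge0 p). pose proof (Inorm_ge0 q). pose proof (Inorm_ge0 m).
        assert (E1 : Cmod (D (snd (nmul a (w c))) (snd (jm m))) <= M0 * (nnorm a * (nnorm c * nnorm p * nnorm q)) * nnorm m).
        { eapply Rle_trans. apply HMb. apply Rmult_le_compat_r. apply Inorm_ge0.
          apply Rmult_le_compat_l; auto. eapply Rle_trans. apply Xnorm_snd.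
          eapply Rle_trans. apply Xnorm_mul. apply Rmult_le_compat_l; auto. }
        assert (E2 : Cmod (D (snd (w c)) (snd (nmul a (jm m)))) <= M0 * (nnorm c * nnorm p * nnorm q) * (nnorm a * nnorm m)).
        { eapply Rle_trans. apply HMb. apply Rmult_le_compat.
          - apply Rmult_le_pos; auto. apply Inorm_ge0.
          - apply Inorm_ge0.
          - apply Rmult_le_compat_l; auto. eapply Rle_trans. apply Xnorm_snd. auto.
          - eapply Rle_trans. apply Xnorm_snd. eapply Rle_trans. apply Xnorm_mul.
            rewrite Xnorm_jm. apply Rle_refl. }
        eapply Rle_trans. apply Cmod_sub. nra.
      - intros x y z. unfold G, w.
        replace (nmul (nmul (nmul z x) (jm p)) (jm q)) with (nmul (nmul x (nmul z (jm p))) (jm q)) by mac.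
        replace (nmul (nmul (nmul y z) (jm p)) (jm q)) with (nmul (nmul z (jm p)) (nmul y (jm q))) by mac.
        replace (nmul y (nmul (nmul x (nmul z (jm p))) (jm q))) with (nmul (nmul x (nmul z (jm p))) (nmul y (jm q))) by mac.
        replace (nmul x (nmul (nmul z (jm p)) (nmul y (jm q)))) with (nmul (nmul x (nmul z (jm p))) (nmul y (jm q))) by mac.
        replace (nmul (nmul x y) (nmul (nmul z (jm p)) (jm q))) with (nmul (nmul x (nmul z (jm p))) (nmul y (jm q))) by mac.
        rewrite (DXder (nmul x (nmul z (jm p))) (nmul y (jm q)) (jm m)) by jimg.
        rewrite (DXder (nmul z (jm p)) (jm q) (nmul (nmul x y) (jm m))) by jimg.
        rewrite (DXder (nmul x (nmul z (jm p))) (jm q) (nmul y (jm m))) by jimg.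
        rewrite (DXder (nmul z (jm p)) (nmul y (jm q)) (nmul x (jm m))) by jimg.
        replace (nmul (nmul y (jm m)) (nmul x (nmul z (jm p)))) with (nmul (nmul (nmul x y) (jm m)) (nmul z (jm p))) by mac.
        replace (nmul (jm q) (nmul y (jm m))) with (nmul (nmul y (jm q)) (jm m)) by mac.
        replace (nmul (nmul x (jm m)) (nmul z (jm p))) with (nmul (jm m) (nmul x (nmul z (jm p)))) by mac.
        replace (nmul (nmul y (jm q)) (nmul x (jm m))) with (nmul (jm q) (nmul (nmul x y) (jm m))) by mac.
        apply Cx_ext; simpl; ring. }
    pose proof (wa_zero X Hc WX G Gd (jm i0) (jm k0)) as Z.
    unfold G, w in Z.
    rewrite (DXder (jm i0) (nmul (nmul (jm k0) (jm p)) (jm q)) (jm m)) in Z by jimg.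
    rewrite (Hc (jm m) (jm i0)) in Z.
    assert (Z' : DX (jm i0) (nmul (nmul (nmul (jm k0) (jm p)) (jm q)) (jm m)) = C0).
    { revert Z. generalize (DX (jm i0) (nmul (nmul (nmul (jm k0) (jm p)) (jm q)) (jm m))).
      generalize (DX (nmul (nmul (jm k0) (jm p)) (jm q)) (nmul (jm i0) (jm m))).
      intros [a1 a2] [b1 b2] E. unfold Csub, Cadd, Copp, C0 in *; simpl in *.
      injection E; intros. apply Cx_ext; simpl; lra. }
    unfold DX in Z'. rewrite !Xjm_mul in Z'. exact Z'. }
  assert (bfu : forall i u : J, @bounded_functional J (fun k => D i (nmul u k))).
  { intros i u. pose proof (Hf i) as Hfi.
    destruct (bf_bound J (D i) Inorm_ge0 Hfi) as [Mi [HMi0 HMi]].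
    destruct Hfi as [fa [fs _]]. split; [|split].
    - intros; rewrite JmulDr; apply fa.
    - intros; rewrite Jmul_scalr; apply fs.
    - exists (Mi * nnorm u). intros k. eapply Rle_trans. apply HMi.
      rewrite Rmult_assoc. apply Rmult_le_compat_l; auto. apply Jnorm_mul. }
  assert (P3 : forall i k1 k2 k : J, D i (nmul (nmul k1 k2) k) = C0).
  { intros i k1 k2. apply (Lkill WX _ (bfu i (nmul k1 k2))).
    intros j k. rewrite JmulA. apply P4. }
  assert (P2 : forall i k1 k : J, D i (nmul k1 k) = C0).
  { intros i k1. apply (Lkill WX _ (bfu i k1)).
    intros j k. rewrite JmulA. apply P3. }
  intros i k. apply (Lkill WX _ (Hf i)). intros j k'. apply P2.
Qed.
End Main.

Theorem theorem6p1 (A B : NAlg) (theta : A -> B) (I : B -> Prop)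
  (HA : is_banach_algebra A) (HB : is_banach_algebra B)
  (Htheta : contraction_hom A B theta) (HI : closed_ideal B I) :
  commutative (amalg A B theta I HI) ->
  (weakly_amenable (amalg A B theta I HI) <->
   weakly_amenable A /\ weakly_amenable (ideal_alg B I HI)).
Proof.
  intro Hc. split.
  - intro WX. split.
    + exact (forwardA A B theta I HA HB HI Hc WX).
    + exact (forwardJ A B theta I HA HB Htheta HI Hc WX).
  - intros [WA WJ]. exact (back A B theta I HA HB Htheta HI Hc WA WJ).
Qed.
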